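(* Let $\Omega$ be a finite set, $K\ge1$, $A$ a symmetric real $|\Omega|\times|\Omega|$ matrix, $w\in\mathbb{R}^{\Omega}$ with $w_p>0$ for all $p$, and $W=\mathrm{diag}(w)$. For nonzero $X\in\{0,1\}^{\Omega}$ let $e(X)=-\frac{X'AX}{w'X}$ and $\nabla e(X)=w\frac{X'AX}{(w'X)^2}-AX\frac{2}{w'X}$. For labelings $S:\Omega\to\{1,\dots,K\}$ with all segments $S^k$ (identified with indicator vectors) nonempty let $E_A(S)=\sum_k e(S^k)$. Fix such a labeling $S_t$ and for $\delta\in\mathbb{R}$ define $$B_t(S,\delta)=\sum_{k}\nabla e(S^k_t)'S^k+\delta\sum_k\frac{(\mathbf{1}-2S^k_t)'WS^k}{w'S^k_t}.$$ Then for every $\delta\ge-\lambda_0(W^{-1/2}AW^{-1/2})$, where $\lambda_0$ denotes the smallest eigenvalue, $B_t(\cdot,\delta)+K\delta$ is an auxiliary function for $E_A$ at $S_t$; in particular $\{B_t(\cdot,\delta)+K\delta\}_{\delta\in\mathbb{R}}$ is a pseudo-bound for $E_A$ at $S_t$. Moreover, for any factors $c\in\mathcal{F}$ (subsets of $\Omega$), arbitrary real potentials $E_c(S_c)$ and $\gamma\in\mathbb{R}$, the same holds for $B_t(S,\delta)+K\delta+\gamma\sum_{c\in\mathcal{F}}E_c(S_c)$ with respect to the joint energy $E_A(S)+\gamma\sum_{c\in\mathcal{F}}E_c(S_c)$.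
   Context: An auxiliary function for $E$ at $S_t$ is a function $a$ with $E(S)\le a(S)$ for all admissible $S$ and $E(S_t)=a(S_t)$. A family $B(S,\delta)$ indexed by a real parameter $\delta$ is a pseudo-bound for $E$ at $S_t$ if there is at least one $\delta'$ for which $B(\cdot,\delta')$ is an auxiliary function for $E$ at $S_t$. $\mathbf{1}$ is the all-ones vector. *)

(* Defs.v *)
From HB Require Import structures.
From mathcomp Require Import all_boot all_order all_algebra.
From mathcomp Require Import reals.
Set Implicit Arguments. Unset Strict Implicit. Unset Printing Implicit Defensive.
Import Order.TTheory GRing.Theory Num.Theory.
Local Open Scope ring_scope.

Section Defs.
Variables (R : realType) (n K : nat).

Definition labeling := 'I_n -> 'I_K.

Definition admissible (S : labeling) : Prop := forall k : 'I_K, exists i, S i = k.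

Definition seg (S : labeling) (k : 'I_K) : 'cV[R]_n :=
  \col_i (S i == k)%:R.

Definition sc (M : 'M[R]_1) : R := M 0 0.

Definition e_fun (A : 'M[R]_n) (w X : 'cV[R]_n) : R :=
  - sc (X^T *m A *m X) / sc (w^T *m X).

Definition grad_e (A : 'M[R]_n) (w X : 'cV[R]_n) : 'cV[R]_n :=
  (sc (X^T *m A *m X) / (sc (w^T *m X)) ^+ 2) *: w
  - (2 / sc (w^T *m X)) *: (A *m X).

Definition E_A (A : 'M[R]_n) (w : 'cV[R]_n) (S : labeling) : R :=
  \sum_(k < K) e_fun A w (seg S k).

Definition Wmat (w : 'cV[R]_n) : 'M[R]_n := diag_mx (w^T).

Definition Wmhalf (w : 'cV[R]_n) : 'M[R]_n := diag_mx (\row_i (Num.sqrt (w i 0))^-1).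

Definition const1 : 'cV[R]_n := const_mx 1.

Definition B_t (A : 'M[R]_n) (w : 'cV[R]_n) (St S : labeling) (delta : R) : R :=
  \sum_(k < K) sc ((grad_e A w (seg St k))^T *m seg S k)
  + delta * \sum_(k < K)
      sc ((const1 - 2 *: seg St k)^T *m Wmat w *m seg S k) / sc (w^T *m seg St k).

Definition smallest_eigenvalue (M : 'M[R]_n) (l : R) : Prop :=
  eigenvalue M l /\ forall a, eigenvalue M a -> l <= a.

Definition auxiliary (E a : labeling -> R) (St : labeling) : Prop :=
  (forall S, admissible S -> E S <= a S) /\ E St = a St.

Definition pseudo_bound (E : labeling -> R) (B : labeling -> R -> R) (St : labeling) : Prop :=
  exists d, auxiliary E (fun S => B S d) St.

Definition restr (S : labeling) (c : {set 'I_n}) : {x : 'I_n | x \in c} -> 'I_K :=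
  fun x => S (proj1_sig x).

End Defs.

Arguments restr {n K} S c _.
Arguments seg {R n K} S k.
Arguments E_A {R n K} A w S.
Arguments B_t {R n K} A w St S delta.
Arguments auxiliary {R n K} E a St.
Arguments pseudo_bound {R n K} E B St.
Arguments smallest_eigenvalue {R n} M l.
Arguments Wmhalf {R n} w.
Arguments admissible {n K} S.

(* Main.v *)
Require Import Defs.
From HB Require Import structures.
From mathcomp Require Import all_boot all_order all_algebra.
From mathcomp Require Import reals complex ring lra.
Set Implicit Arguments. Unset Strict Implicit. Unset Printing Implicit Defensive.
Import Order.TTheory GRing.Theory Num.Theory.
Local Open Scope ring_scope.
Section T.
Variable R : realType.
Variable n : nat.
Local Notation C := (R[i]).
Local Notation toC := (real_complex R).

Lemma Mc_herm (M : 'M[R]_n) : M^T = M -> map_mx toC M \is hermsymmx.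
Proof.
move=> sM; apply: realsym_hermsym.
  apply/is_hermitianmxP; rewrite expr0 scale1r map_mx_id // map_trmx sM //.
apply/mxOverP => i j; rewrite mxE; apply/complex_realP; by exists (M i j).
Qed.

Lemma conj_map_real m p (N : 'M[R]_(m,p)) : map_mx Num.conj (map_mx toC N) = map_mx toC N.
Proof. by apply/matrixP=> i j; rewrite !mxE; apply: conjc_real. Qed.

Lemma quad_diag (y : 'rV[C]_n) (d : 'rV[C]_n) :
  (y *m diag_mx d *m map_mx Num.conj y^T) 0 0 = \sum_i d 0 i * (`|y 0 i| ^+ 2).
Proof.
rewrite mxE; apply: eq_bigr => i _; by rewrite mul_mx_diag !mxE normCK mulrAC mulrC.
Qed.

Lemma quad_id (y : 'rV[C]_n) :
  (y *m map_mx Num.conj y^T) 0 0 = \sum_i (`|y 0 i| ^+ 2).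
Proof. rewrite mxE; apply: eq_bigr => i _; by rewrite !mxE normCK. Qed.

Lemma spec_ineq (M : 'M[R]_n) : M^T = M -> forall l : R,
  (forall i, l <= complex.Re (spectral_diag (map_mx toC M) 0 i)) ->
  forall r : 'rV[R]_n, l * (r *m r^T) 0 0 <= (r *m M *m r^T) 0 0.
Proof.
move=> sM l hl r.
set Mc := map_mx toC M.
have H := Mc_herm sM.
have /orthomx_spectralP Meq := hermitian_normalmx H.
set P := spectralmx Mc in Meq; set d := spectral_diag Mc in Meq hl.
have Pu : P \is unitarymx := spectral_unitarymx Mc.
rewrite invmx_unitary // in Meq.
have dre : forall i, d 0 i = ((complex.Re (d 0 i))%:C)%C.
  move=> i; have /mxOverP/(_ 0 i) := hermitian_spectral_diag_real H.
  by move=> /RRe_real ->.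
rewrite -(lecR (R:=R)).
have -> : ((l * (r *m r^T) 0 0)%:C)%C = toC l * (map_mx toC (r *m r^T)) 0 0. by rewrite [X in _ = _ * X]mxE rmorphM.
have -> : (((r *m M *m r^T) 0 0)%:C)%C = (map_mx toC (r *m M *m r^T)) 0 0 by rewrite [RHS]mxE.
have rT : map_mx toC r^T = map_mx Num.conj (map_mx toC r)^T.
  by apply/matrixP=> i j; rewrite !mxE; symmetry; apply: conjc_real.
rewrite !map_mxM rT (_ : map_mx _ M = Mc) // /Mc Meq.
set rc := map_mx toC r.
set y := rc *m map_mx Num.conj P^T.
have yT : map_mx Num.conj y^T = P *m map_mx Num.conj rc^T.
  by rewrite /y trmx_mul map_mxM trmxCK.
have e1 : rc *m map_mx Num.conj rc^T = y *m map_mx Num.conj y^T.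
  by rewrite yT /y mulmxA mulmxKtV.
have e2 : rc *m (map_mx Num.conj P^T *m diag_mx d *m P) *m map_mx Num.conj rc^T
   = y *m diag_mx d *m map_mx Num.conj y^T.
  by rewrite yT /y !mulmxA.
rewrite e1 e2 quad_diag quad_id mulr_sumr; apply: ler_sum => i _.
rewrite (dre i) ler_wpM2r ?lecR //; exact/exprn_ge0/normr_ge0.
Qed.

Lemma spec_eig (M : 'M[R]_n) : M^T = M -> forall i,
  eigenvalue M (complex.Re (spectral_diag (map_mx toC M) 0 i)).
Proof.
move=> sM i.
set Mc := map_mx toC M.
have H := Mc_herm sM.
have /orthomx_spectralP Meq := hermitian_normalmx H.
set P := spectralmx Mc in Meq *; set d := spectral_diag Mc in Meq *.
have Pu : P \is unitarymx := spectral_unitarymx Mc.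
rewrite invmx_unitary // in Meq.
have dre : d 0 i = ((complex.Re (d 0 i))%:C)%C.
  have /mxOverP/(_ 0 i) := hermitian_spectral_diag_real H.
  by move=> /RRe_real ->.
rewrite eigenvalue_root_char -(fmorph_root toC) map_char_poly.
rewrite (_ : map_mx _ M = Mc) // -eigenvalue_root_char.
rewrite [X in eigenvalue _ X](_ : _ = d 0 i); last by rewrite [RHS]dre.
have /unitarymxP PP := Pu.
apply/eigenvalueP; exists (row i P).
  rewrite -row_mul /Mc Meq !mulmxA PP mul1mx row_mul row_diag_mx -scalemxAl.
  by rewrite -rowE.
apply/eqP => h.
have : row i (P *m map_mx Num.conj P^T) = 0 by rewrite row_mul h mul0mx.
rewrite PP => /rowP/(_ i); rewrite !mxE eqxx /=.
by move/eqP; rewrite oner_eq0.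
Qed.
End T.
Section S.
Variable R : realType.
Variable n : nat.
Variables (A : 'M[R]_n) (w : 'cV[R]_n).
Hypothesis sA : A^T = A.
Hypothesis wpos : forall i, 0 < w i 0.

Definition bil (x y : 'cV[R]_n) := sc (x^T *m A *m y).

Lemma sc_tr (M : 'M[R]_1) : sc M^T = sc M.
Proof. by rewrite /sc mxE. Qed.

Lemma bilC x y : bil x y = bil y x.
Proof. by rewrite /bil -sc_tr !trmx_mul sA trmxK mulmxA. Qed.

Lemma sc_sum (x y : 'cV[R]_n) : sc (x^T *m y) = \sum_i x i 0 * y i 0.
Proof. by rewrite /sc mxE; apply: eq_bigr => i _; rewrite mxE. Qed.

Lemma wform (v x : 'cV[R]_n) : sc (v^T *m Wmat w *m x) = \sum_i v i 0 * w i 0 * x i 0.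
Proof.
rewrite /sc /Wmat mxE; apply: eq_bigr => i _; by rewrite mul_mx_diag !mxE.
Qed.

Lemma grad_form (T X : 'cV[R]_n) :
  sc ((grad_e A w T)^T *m X) =
  bil T T / (sc (w^T *m T)) ^+ 2 * sc (w^T *m X) - 2 / sc (w^T *m T) * bil T X.
Proof.
rewrite /grad_e /bil linearB /= !linearZ /=. rewrite mulmxDl -!scalemxAl mulNmx trmx_mul sA.
by rewrite /sc !mxE mulrN.
Qed.

Lemma bilDl x y z : bil (x + y) z = bil x z + bil y z.
Proof. by rewrite /bil linearD /= !mulmxDl /sc mxE. Qed.
Lemma bilZl a x z : bil (a *: x) z = a * bil x z.
Proof. by rewrite /bil linearZ /= -!scalemxAl /sc mxE. Qed.
Lemma bilDr x y z : bil z (x + y) = bil z x + bil z y.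
Proof. by rewrite bilC bilDl !(bilC z). Qed.
Lemma bilZr a x z : bil z (a *: x) = a * bil z x.
Proof. by rewrite bilC bilZl bilC. Qed.

Lemma bil_lin (a b : R) (X T : 'cV[R]_n) :
  bil (a *: X - b *: T) (a *: X - b *: T) =
  a ^+ 2 * bil X X - 2 * a * b * bil T X + b ^+ 2 * bil T T.
Proof.
rewrite -scaleNr !(bilDl, bilDr, bilZl, bilZr) (bilC X T); ring.
Qed.

Lemma alg_ineq (a b c l d S Q Qx Qt P : R) : 0 < a -> 0 < b -> l * S <= Q -> - l <= d -> 0 <= S ->
  S = 1 / b - 2 * c / (a * b) + 1 / a ->
  Q = b^-1 ^+ 2 * Qx - 2 * b^-1 * a^-1 * P + a^-1 ^+ 2 * Qt ->
  - Qx / b <= Qt / a ^+ 2 * b - 2 / a * P + d * ((b - 2 * c) / a) + d.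
Proof.
move=> ha hb hQ hd hS eS eQ.
rewrite -subr_ge0.
have -> : Qt / a ^+ 2 * b - 2 / a * P + d * ((b - 2 * c) / a) + d - - Qx / b
   = b * (Q - l * S) + b * S * (l + d).
  rewrite eS eQ; field.
  by rewrite (gt_eqF ha) (gt_eqF hb).
apply: addr_ge0.
  apply: mulr_ge0; [exact: ltW | by rewrite subr_ge0].
apply: mulr_ge0; first exact: mulr_ge0 (ltW hb) hS.
lra.
Qed.

Lemma aux1 (t w0 x : R) : (1 - 2*t)*w0*x = w0*x - 2*(w0*t*x).
Proof. ring. Qed.

Lemma aux2 (a b w0 x t : R) : a != 0 -> b != 0 ->
  w0*(b^-1*x - a^-1*t)^+2 = b^-1^+2*(w0*(x*x)) - 2/(a*b)*(w0*t*x) + a^-1^+2*(w0*(t*t)).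
Proof. by move=> ha hb; field; rewrite ha hb. Qed.

Lemma aux3 (t w0 : R) : t * t = t -> (1 - 2*t)*w0*t = -(w0*t).
Proof.
move=> h; have -> : (1 - 2*t)*w0*t = w0*t - 2*w0*(t*t) by ring.
rewrite h; ring.
Qed.

Lemma seg_ineq l (Hq : forall u : 'cV[R]_n, l * \sum_i w i 0 * u i 0 ^+ 2 <= bil u u)
  delta (hd : - l <= delta) (X T : 'cV[R]_n)
  (Xb : forall i, X i 0 * X i 0 = X i 0) (Tb : forall i, T i 0 * T i 0 = T i 0)
  (ha : 0 < sc (w^T *m T)) (hb : 0 < sc (w^T *m X)) :
  e_fun A w X <= sc ((grad_e A w T)^T *m X)
     + delta * (sc ((const1 R n - 2 *: T)^T *m Wmat w *m X) / sc (w^T *m T)) + delta.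
Proof.
set a := sc (w^T *m T) in ha *; set b := sc (w^T *m X) in hb *.
set c := \sum_i w i 0 * T i 0 * X i 0.
have eb : b = \sum_i w i 0 * X i 0 by rewrite /b sc_sum.
have ea : a = \sum_i w i 0 * T i 0 by rewrite /a sc_sum.
have hw : sc ((const1 R n - 2 *: T)^T *m Wmat w *m X) = b - 2 * c.
  rewrite wform eb /c mulr_sumr -sumrB; apply: eq_bigr => i _.
  rewrite !mxE; exact: aux1.
set u := b^-1 *: X - a^-1 *: T.
have hS : \sum_i w i 0 * u i 0 ^+ 2 = 1 / b - 2 * c / (a * b) + 1 / a.
  have -> : 1 / b - 2 * c / (a * b) + 1 / a =
     b^-1 ^+ 2 * (\sum_i w i 0 * X i 0) - 2 / (a * b) * c + a^-1 ^+ 2 * (\sum_i w i 0 * T i 0).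
    by rewrite -eb -ea; field; rewrite (gt_eqF ha) (gt_eqF hb).
  rewrite /c !mulr_sumr -sumrB -big_split /=.
  apply: eq_bigr => i _; rewrite !mxE.
  have := Xb i; have := Tb i; move=> ti xi.
  rewrite -[X in _ = _ * (_ * X) - _ + _]xi -[X in _ = _ - _ + _ * (_ * X)]ti.
  by apply: aux2; rewrite gt_eqF.
have S0 : 0 <= \sum_i w i 0 * u i 0 ^+ 2.
  apply: sumr_ge0 => i _; apply: mulr_ge0; [exact: ltW | exact: sqr_ge0].
have := Hq u; rewrite /u bil_lin => hq.
rewrite hw grad_form /e_fun -/(bil X X) -/a -/b.
apply: (alg_ineq ha hb hq hd S0 hS).
rewrite /bil; ring.
Qed.

Lemma seg_eq delta (T : 'cV[R]_n)
  (Tb : forall i, T i 0 * T i 0 = T i 0) (ha : 0 < sc (w^T *m T)) :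
  e_fun A w T = sc ((grad_e A w T)^T *m T)
     + delta * (sc ((const1 R n - 2 *: T)^T *m Wmat w *m T) / sc (w^T *m T)) + delta.
Proof.
set a := sc (w^T *m T) in ha *.
have hw : sc ((const1 R n - 2 *: T)^T *m Wmat w *m T) = - a.
  rewrite wform /a sc_sum -sumrN; apply: eq_bigr => i _.
  rewrite !mxE; have := Tb i; move=> ti.
  exact: aux3.
rewrite hw grad_form /e_fun -/(bil T T) -/a.
field; by rewrite (gt_eqF ha).
Qed.
End S.

Section F.
Variable R : realType.
Variable n : nat.
Local Notation toC := (real_complex R).

Lemma aux4 (s x w0 : R) : s ^+ 2 = w0 -> s * x * (s * x) = w0 * x ^+ 2.
Proof. by move=> <-; ring. Qed.

Lemma quadW (A : 'M[R]_n) (w : 'cV[R]_n) (sA : A^T = A) (wpos : forall i, 0 < w i 0)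
  (l : R) (hl : forall i, l <= complex.Re (spectral_diag (map_mx toC (Wmhalf w *m A *m Wmhalf w)) 0 i))
  (u : 'cV[R]_n) : l * \sum_i w i 0 * u i 0 ^+ 2 <= bil A u u.
Proof.
set Wh := Wmhalf w.
have sW : Wh^T = Wh by rewrite /Wh /Wmhalf tr_diag_mx.
have sM : (Wh *m A *m Wh)^T = Wh *m A *m Wh by rewrite !trmx_mul sW sA mulmxA.
set r : 'rV[R]_n := \row_i (Num.sqrt (w i 0) * u i 0).
have := spec_ineq sM hl r.
have rW : r *m Wh = u^T.
  apply/rowP => j; rewrite mul_mx_diag !mxE mulrAC mulfV ?mul1r //.
  by rewrite gt_eqF // sqrtr_gt0.
have Wr : Wh *m r^T = u by rewrite -[LHS]trmxK trmx_mul sW trmxK rW trmxK.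
have -> : (r *m (Wh *m A *m Wh) *m r^T) = u^T *m A *m u.
  by rewrite !mulmxA rW -!mulmxA Wr.
have -> : (r *m r^T) 0 0 = \sum_i w i 0 * u i 0 ^+ 2.
  rewrite mxE; apply: eq_bigr => i _; rewrite !mxE.
  exact: aux4 (sqr_sqrtr (ltW (wpos i))).
done.
Qed.

Lemma quadW_ex (A : 'M[R]_n) (w : 'cV[R]_n) :
  exists l : R, forall i, l <= complex.Re (spectral_diag (map_mx toC (Wmhalf w *m A *m Wmhalf w)) 0 i).
Proof.
set d := spectral_diag _.
exists (- \sum_i `|complex.Re (d 0 i)|) => i.
rewrite (bigD1 i) //= opprD.
have h1 : - `|complex.Re (d 0 i)| <= complex.Re (d 0 i) by rewrite lerNl -normrN ler_norm.
have h2 : 0 <= \sum_(j | j != i) `|complex.Re (d 0 j)| by apply: sumr_ge0 => j _.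
lra.
Qed.

Section Main.
Variable K : nat.
Variables (A : 'M[R]_n) (w : 'cV[R]_n).
Hypothesis sA : A^T = A.
Hypothesis wpos : forall i, 0 < w i 0.

Lemma seg_bin (S : labeling n K) k i : (seg S k : 'cV[R]_n) i 0 * seg S k i 0 = seg S k i 0.
Proof. by rewrite /seg !mxE; case: (S i == k); rewrite ?mulr1 ?mulr0. Qed.

Lemma seg_pos (S : labeling n K) k : admissible S -> 0 < sc (w^T *m (seg S k : 'cV[R]_n)).
Proof.
move=> /(_ k) [i0 hi0].
rewrite sc_sum (bigD1 i0) //= /seg !mxE hi0 eqxx mulr1.
apply: ltr_pwDl; first exact: wpos.
apply: sumr_ge0 => j _; rewrite mxE; apply: mulr_ge0; first exact: ltW.
by case: (S j == k).
Qed.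

Lemma main_aux l (hl : forall i, l <= complex.Re (spectral_diag (map_mx toC (Wmhalf w *m A *m Wmhalf w)) 0 i))
  (St : labeling n K) (hSt : admissible St) delta (hd : - l <= delta) :
  auxiliary (E_A A w) (fun S => B_t A w St S delta + K%:R * delta) St.
Proof.
have Hq := quadW sA wpos hl.
have hK : K%:R * delta = \sum_(k < K) delta by rewrite sumr_const card_ord mulr_natl.
split.
  move=> S hS; rewrite /E_A /B_t hK mulr_sumr -!big_split /=.
  apply: ler_sum => k _.
  apply: (seg_ineq sA wpos Hq hd); [exact: seg_bin | exact: seg_bin | exact: seg_pos | exact: seg_pos].
rewrite /E_A /B_t hK mulr_sumr -!big_split /=.
apply: eq_bigr => k _.
apply: (seg_eq sA); [exact: seg_bin | exact: seg_pos].
Qed.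

End Main.
End F.

Lemma aux_add (R : realType) n K (E a : labeling n K -> R) (G : labeling n K -> R) St :
  auxiliary E a St -> auxiliary (fun S => E S + G S) (fun S => a S + G S) St.
Proof.
move=> [h1 h2]; split; last by rewrite h2.
by move=> S hS; rewrite lerD2r; apply: h1.
Qed.

Theorem theorem4 (R : realType) (n K : nat) (A : 'M[R]_n) (w : 'cV[R]_n)
  (St : labeling n K) :
  (0 < K)%N -> A^T = A -> (forall i, 0 < w i 0) -> admissible St ->
  (forall (delta l0 : R),
     smallest_eigenvalue (Wmhalf w *m A *m Wmhalf w) l0 -> - l0 <= delta ->
     auxiliary (E_A A w) (fun S => B_t A w St S delta + K%:R * delta) St)
  /\ pseudo_bound (E_A A w) (fun S delta => B_t A w St S delta + K%:R * delta) St
  /\ (forall (F : {set {set 'I_n}})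
             (Ec : forall c : {set 'I_n}, ({x : 'I_n | x \in c} -> 'I_K) -> R)
             (gamma : R),
        let E := fun S => E_A A w S + gamma * \sum_(c in F) Ec c (restr S c) in
        (forall (delta l0 : R),
           smallest_eigenvalue (Wmhalf w *m A *m Wmhalf w) l0 -> - l0 <= delta ->
           auxiliary E (fun S => B_t A w St S delta + K%:R * delta
                                 + gamma * \sum_(c in F) Ec c (restr S c)) St)
        /\ pseudo_bound E (fun S delta => B_t A w St S delta + K%:R * delta
                                 + gamma * \sum_(c in F) Ec c (restr S c)) St).
Proof.
move=> _ sA wpos hSt.
have sM : (Wmhalf w *m A *m Wmhalf w)^T = Wmhalf w *m A *m Wmhalf w.
  by rewrite !trmx_mul /Wmhalf tr_diag_mx sA mulmxA.
have P1 : forall (delta l0 : R),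
     smallest_eigenvalue (Wmhalf w *m A *m Wmhalf w) l0 -> - l0 <= delta ->
     auxiliary (E_A A w) (fun S => B_t A w St S delta + K%:R * delta) St.
  move=> delta l0 [_ hmin] hd.
  apply: (main_aux sA wpos _ hSt hd) => i.
  exact/hmin/spec_eig.
have [l hl] := quadW_ex A w.
have P2 : pseudo_bound (E_A A w) (fun S delta => B_t A w St S delta + K%:R * delta) St.
  exists (- l); apply: (main_aux sA wpos hl hSt); exact: lexx.
split; first exact: P1.
split; first exact: P2.
move=> F Ec gamma E; split.
  move=> delta l0 hl0 hd; exact: (aux_add _ (P1 delta l0 hl0 hd)).
have [d hd] := P2; exists d; exact: (aux_add _ hd).
Qed.
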